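(* Let $v_1,\dots,v_n\in\mathbb{R}^d$, let $x\in[0,1]^n$ with $\sum_{i=1}^n x(i)=q$ and $X=\sum_i x(i)v_iv_i^\top$ nonsingular. Let $S\subseteq[n]$ with $|S|=b$ be such that $Z=\sum_{i\in S}v_iv_i^\top$ is nonsingular, and let $Z'$ be a minimizer of $\operatorname{tr}((Z-v_iv_i^\top+v_jv_j^\top)^{-1})$ over all pairs $i\in S$, $j\in[n]\setminus S$ (singular matrices having value $+\infty$). For any $\varepsilon>0$, if \[ \operatorname{tr}(Z^{-1})\ge(1+\varepsilon)\operatorname{tr}(X^{-1})\quad\text{and}\quad b\ge q+2d+2(1+\varepsilon)\sqrt{\operatorname{tr}(X)\operatorname{tr}(X^{-1})}, \] then $\operatorname{tr}(Z'^{-1})\le\big(1-\frac{\varepsilon}{b}\big)\operatorname{tr}(Z^{-1})$. *)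

(* Defs.v *)
From mathcomp Require Import all_boot all_order all_algebra.
Set Implicit Arguments. Unset Strict Implicit. Unset Printing Implicit Defensive.
Import Order.TTheory GRing.Theory Num.Theory.
Local Open Scope ring_scope.

Definition outer (R : comRingType) (d : nat) (v : 'cV[R]_d) : 'M[R]_d :=
  v *m v^T.

Definition swapmx (R : comRingType) (d n : nat) (v : 'I_n -> 'cV[R]_d)
  (Z : 'M[R]_d) (i j : 'I_n) : 'M[R]_d :=
  Z - outer (v i) + outer (v j).

(* Main.v *)
Require Import Defs.
From mathcomp Require Import all_boot all_order all_algebra.
From mathcomp Require Import lra ring.
Import Order.TTheory GRing.Theory Num.Theory.
Local Open Scope ring_scope.

Set Implicit Arguments. Unset Strict Implicit. Unset Printing Implicit Defensive.


Definition dotv (R : rcfType) (d : nat) (u w : 'cV[R]_d) : R := (u^T *m w) 0 0.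

Lemma dotvE (R : rcfType) d (u w : 'cV[R]_d) : dotv u w = \sum_i u i 0 * w i 0.
Proof. by rewrite /dotv mxE; apply: eq_bigr => i _; rewrite mxE. Qed.

Lemma dotvC (R : rcfType) d (u w : 'cV[R]_d) : dotv u w = dotv w u.
Proof. by rewrite !dotvE; apply: eq_bigr => i _; rewrite mulrC. Qed.

Lemma dotv_sumr (R : rcfType) d (u : 'cV[R]_d) (I : finType) (P : pred I) (F : I -> 'cV[R]_d) :
  dotv u (\sum_(i | P i) F i) = \sum_(i | P i) dotv u (F i).
Proof. by rewrite /dotv mulmx_sumr summxE. Qed.

Lemma dotvZr (R : rcfType) d (u w : 'cV[R]_d) a : dotv u (a *: w) = a * dotv u w.
Proof. by rewrite /dotv -scalemxAr mxE. Qed.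

Lemma dotvDr (R : rcfType) d (u w y : 'cV[R]_d) : dotv u (w + y) = dotv u w + dotv u y.
Proof. by rewrite /dotv mulmxDr mxE. Qed.

Lemma dotvBr (R : rcfType) d (u w y : 'cV[R]_d) : dotv u (w - y) = dotv u w - dotv u y.
Proof. by rewrite /dotv mulmxBr !mxE. Qed.

Lemma dotv_mul (R : rcfType) d (u w : 'cV[R]_d) (A : 'M[R]_d) :
  dotv u (A *m w) = dotv (A^T *m u) w.
Proof. by rewrite /dotv trmx_mul trmxK mulmxA. Qed.

Lemma outer_mulr (R : rcfType) d (a b c : 'cV[R]_d) :
  (a *m b^T) *m c = dotv b c *: a.
Proof. by rewrite -mulmxA [b^T *m c]mx11_scalar mul_mx_scalar. Qed.

Lemma tr_outer (R : rcfType) d (a b : 'cV[R]_d) : \tr (a *m b^T) = dotv b a.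
Proof. by rewrite mxtrace_mulC /mxtrace big_ord1. Qed.

Lemma quad_disc (R : rcfType) (a b c : R) : 0 <= a ->
  (forall t, 0 <= a * t ^+ 2 + 2 * b * t + c) -> b ^+ 2 <= a * c.
Proof.
move=> a0 H; have [az|a_gt0] := eqVneq a 0.
  rewrite az mul0r.
  have [b0|bn0] := eqVneq b 0; first by rewrite b0 expr0n.
  have := H (- (c + 1) / (2 * b)); rewrite az.
  have -> : 0 * (- (c + 1) / (2 * b)) ^+ 2 + 2 * b * (- (c + 1) / (2 * b)) + c = -1.
    field. done.
  lra.
have ap : 0 < a by rewrite lt_def a_gt0.
have := H (- b / a).
have -> : a * (- b / a) ^+ 2 + 2 * b * (- b / a) + c = c - b ^+ 2 / a by field.
rewrite subr_ge0 ler_pdivrMr // => h; rewrite mulrC; exact: h.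
Qed.

Lemma cauchy_schwarz (R : rcfType) (I : finType) (P : pred I) (w f g : I -> R) :
  (forall i, P i -> 0 <= w i) ->
  (\sum_(i | P i) w i * f i * g i) ^+ 2 <=
  (\sum_(i | P i) w i * f i ^+ 2) * (\sum_(i | P i) w i * g i ^+ 2).
Proof.
move=> w0; apply: quad_disc; first by apply: sumr_ge0 => i /w0 h; rewrite mulr_ge0 // sqr_ge0.
move=> t.
have -> : (\sum_(i | P i) w i * f i ^+ 2) * t ^+ 2 + 2 * (\sum_(i | P i) w i * f i * g i) * t
  + \sum_(i | P i) w i * g i ^+ 2 = \sum_(i | P i) w i * (t * f i + g i) ^+ 2.
  rewrite mulr_suml mulr_sumr mulr_suml -!big_split /=; apply: eq_bigr => i _; ring.
by apply: sumr_ge0 => i /w0 h; rewrite mulr_ge0 // sqr_ge0.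
Qed.


Lemma cs_vec (R : rcfType) d (I : finType) (P : pred I) (w : I -> R) (a b : I -> 'cV[R]_d) :
  (forall i, P i -> 0 <= w i) ->
  (\sum_(i | P i) w i * dotv (a i) (b i)) ^+ 2 <=
  (\sum_(i | P i) w i * dotv (a i) (a i)) * (\sum_(i | P i) w i * dotv (b i) (b i)).
Proof.
move=> w0; apply: quad_disc.
  by apply: sumr_ge0 => i /w0 h; rewrite mulr_ge0 // dotvE sumr_ge0 // => c _; rewrite -expr2 sqr_ge0.
move=> t.
have -> : (\sum_(i | P i) w i * dotv (a i) (a i)) * t ^+ 2 +
   2 * (\sum_(i | P i) w i * dotv (a i) (b i)) * t + \sum_(i | P i) w i * dotv (b i) (b i)
   = \sum_(i | P i) w i * \sum_c (t * a i c 0 + b i c 0) ^+ 2.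
  rewrite mulr_suml mulr_sumr mulr_suml -!big_split /=; apply: eq_bigr => i _.
  rewrite !dotvE !mulr_sumr !mulr_suml -!big_split /=; apply: eq_bigr => c _; ring.
apply: sumr_ge0 => i /w0 h; rewrite mulr_ge0 // sumr_ge0 // => c _; exact: sqr_ge0.
Qed.

Lemma dotv_ge0 (R : rcfType) d (a : 'cV[R]_d) : 0 <= dotv a a.
Proof. by rewrite dotvE sumr_ge0 // => c _; rewrite -expr2 sqr_ge0. Qed.

Lemma dotv_cs (R : rcfType) d (a b : 'cV[R]_d) : dotv a b ^+ 2 <= dotv a a * dotv b b.
Proof.
have := @cs_vec R d 'I_1 xpredT (fun _ => 1) (fun _ => a) (fun _ => b) (fun _ _ => ler01).
by rewrite !big_ord1 !mul1r.
Qed.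

Lemma outer_tr (R : rcfType) d (a : 'cV[R]_d) : (outer a)^T = outer a.
Proof. by rewrite /outer trmx_mul trmxK. Qed.

Lemma tr_sum (R : rcfType) d (I : finType) (P : pred I) (F : I -> 'M[R]_d) :
  \tr (\sum_(i | P i) F i) = \sum_(i | P i) \tr (F i).
Proof.
rewrite /mxtrace; under eq_bigr do rewrite summxE; exact: exchange_big.
Qed.

Lemma tr_sandwich (R : rcfType) d n (v : 'I_n -> 'cV[R]_d) (P : pred 'I_n) (w : 'I_n -> R)
  (B C : 'M[R]_d) :
  \tr (B *m (\sum_(k | P k) w k *: outer (v k)) *m C) =
  \sum_(k | P k) w k * dotv (C^T *m v k) (B *m v k).
Proof.
rewrite mulmx_sumr mulmx_suml tr_sum; apply: eq_bigr => k _.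
rewrite -scalemxAr -scalemxAl. rewrite mxtraceZ; congr (_ * _).
by rewrite /outer !mulmxA -(mulmxA (B *m v k)) -{1}(trmxK C) -trmx_mul tr_outer.
Qed.

Lemma sum_outer1 (R : rcfType) d n (v : 'I_n -> 'cV[R]_d) (P : pred 'I_n) :
  \sum_(k | P k) outer (v k) = \sum_(k | P k) 1 *: outer (v k).
Proof. by apply: eq_bigr => k _; rewrite scale1r. Qed.

Lemma sym_sum (R : rcfType) d n (v : 'I_n -> 'cV[R]_d) (P : pred 'I_n) (w : 'I_n -> R) :
  (\sum_(k | P k) w k *: outer (v k))^T = \sum_(k | P k) w k *: outer (v k).
Proof.
apply/matrixP => r c; rewrite mxE !summxE; apply: eq_bigr => k _.
by rewrite !mxE !big_ord1 !mxE; congr (_ * _); exact: mulrC.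
Qed.

Lemma inv_sym (R : rcfType) d (Z : 'M[R]_d) : Z^T = Z -> (invmx Z)^T = invmx Z.
Proof. by move=> h; rewrite trmx_inv h. Qed.


Lemma trB (R : rcfType) d (A B : 'M[R]_d) : \tr (A - B) = \tr A - \tr B.
Proof. by rewrite /mxtrace -sumrB; apply: eq_bigr => i _; rewrite !mxE. Qed.

Lemma trD (R : rcfType) d (A B : 'M[R]_d) : \tr (A + B) = \tr A + \tr B.
Proof. exact: mxtraceD. Qed.

Lemma comb_id (R : rcfType) d (E1 E2 E3 E4 : 'M[R]_d) (ti tj tij : R) :
  (1 - ti) * (1 + tj) + tij ^+ 2 != 0 ->
  1%:M - E4 + E1 - ((1 - ti) * (1 + tj) + tij ^+ 2)^-1 *:
   ((1 - ti) *: ((1 + tj) *: E1 - tij *: E2) +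
    tij *: (((1 + tj) *: E3 - tij *: E4) + (tij *: E1 + (1 - ti) *: E2)) -
    (1 + tj) *: (tij *: E3 + (1 - ti) *: E4)) = 1%:M.
Proof.
move=> hD; apply/matrixP => r c; rewrite !mxE.
set D := (1 - ti) * (1 + tj) + tij ^+ 2 in hD *.
have -> : (1 - ti) * ((1 + tj) * E1 r c - tij * E2 r c) +
   tij * ((1 + tj) * E3 r c - tij * E4 r c + (tij * E1 r c + (1 - ti) * E2 r c)) -
   (1 + tj) * (tij * E3 r c + (1 - ti) * E4 r c) = D * (E1 r c - E4 r c) by rewrite /D; ring.
by rewrite mulrA mulVf // mul1r; ring.
Qed.

Lemma sym_outerM (R : rcfType) d (M : 'M[R]_d) (a : 'cV[R]_d) :
  M^T = M -> outer a *m M = a *m (M *m a)^T.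
Proof. by move=> hM; rewrite /outer trmx_mul hM mulmxA. Qed.

Lemma swap_inv (R : rcfType) d (Z : 'M[R]_d) (vi vj : 'cV[R]_d) :
  Z \in unitmx -> (invmx Z)^T = invmx Z ->
  let M := invmx Z in let mi := M *m vi in let mj := M *m vj in
  let ti := dotv vi mi in let tj := dotv vj mj in let tij := dotv vi mj in
  (1 - ti) * (1 + tj) + tij ^+ 2 != 0 ->
  (Z - outer vi + outer vj) \in unitmx /\
  \tr (invmx (Z - outer vi + outer vj)) =
   \tr M - ((1 - ti) * dotv mj mj + 2 * tij * dotv mi mj - (1 + tj) * dotv mi mi)
            / ((1 - ti) * (1 + tj) + tij ^+ 2).
Proof.
move=> Zu hM M mi mj ti tj tij hD.
set D := (1 - ti) * (1 + tj) + tij ^+ 2 in hD *.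
set Z2 := Z - outer vi + outer vj.
set W := M - D^-1 *: ((1 - ti) *: (mj *m mj^T) + tij *: (mj *m mi^T + mi *m mj^T)
                     - (1 + tj) *: (mi *m mi^T)).
have tji : dotv vj mi = tij.
  by rewrite /mi dotv_mul hM dotvC.
have ZM : Z *m M = 1%:M by exact: mulmxV.
have eM : Z2 *m M = 1%:M - vi *m mi^T + vj *m mj^T.
  by rewrite /Z2 mulmxDl mulmxBl ZM !sym_outerM.
have Zmi : Z *m mi = vi by rewrite /mi mulmxA ZM mul1mx.
have Zmj : Z *m mj = vj by rewrite /mi mulmxA ZM mul1mx.
have e_j : Z2 *m mj = (1 + tj) *: vj - tij *: vi.
  rewrite /Z2 mulmxDl mulmxBl Zmj !outer_mulr -/tj -/tij scalerDl scale1r.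
  by rewrite addrAC addrC.
have e_i : Z2 *m mi = tij *: vj + (1 - ti) *: vi.
  rewrite /Z2 mulmxDl mulmxBl Zmi !outer_mulr -/ti tji scalerBl scale1r.
  by rewrite addrC.
have ZW : Z2 *m W = 1%:M.
  rewrite /W mulmxBr eM -scalemxAr mulmxBr mulmxDr -!scalemxAr mulmxDr !(mulmxA Z2 mj) !(mulmxA Z2 mi) e_j e_i.
  rewrite !mulmxBl !mulmxDl -!scalemxAl.
  exact: comb_id.
have [Z2u Wu] := mulmx1_unit ZW.
have iZ2 : invmx Z2 = W by rewrite -[W](mulKmx Z2u) ZW mulmx1.
split => //; rewrite iZ2 /W trB mxtraceZ trB trD !mxtraceZ trD !tr_outer.
rewrite [dotv mj mi]dotvC /D; ring.
Qed.


Lemma abs_bound (R : rcfType) (u p q : R) :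
  0 <= p -> 0 <= q -> u ^+ 2 <= p * q -> - (p + q) <= 2 * u.
Proof.
move=> p0 q0 h; have h1 : 0 <= (p - q) ^+ 2 by exact: sqr_ge0.
case: (lerP (- (p + q)) (2 * u)) => // hlt.
have h2 : 0 < - 2 * u - (p + q) by lra.
have h3 : 0 < - 2 * u + (p + q) by lra.
have h4 := mulr_gt0 h2 h3.
nra.
Qed.

Lemma pair_bound (R : rcfType) (ti tj tij hi hj hij cT : R) :
  0 <= ti -> 0 <= tj -> 0 <= hi -> 0 <= hj -> tij ^+ 2 <= ti * tj ->
  hij ^+ 2 <= hi * hj -> 0 <= cT ->
  (1 - 2 * ti) * hj - (1 + 2 * tj) * hi - cT * (1 + tj - ti) <=
  (1 - ti) * hj + 2 * tij * hij - (1 + tj) * hi - cT * ((1 - ti) * (1 + tj) + tij ^+ 2).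
Proof.
move=> ti0 tj0 hi0 hj0 ct ch c0.
have h1 : (tij * hij) ^+ 2 <= (ti * hj) * (tj * hi).
  rewrite exprMn; have -> : ti * hj * (tj * hi) = (ti * tj) * (hi * hj) by ring.
  by apply: ler_pM => //; rewrite sqr_ge0.
have p1 : 0 <= ti * hj by rewrite mulr_ge0.
have p2 : 0 <= tj * hi by rewrite mulr_ge0.
have h2 : - (ti * hj + tj * hi) <= 2 * (tij * hij) by apply: abs_bound.
have h3 : 0 <= cT * (ti * tj - tij ^+ 2) by rewrite mulr_ge0 // subr_ge0.
nra.
Qed.

Lemma final_ineq (R : rcfType) (T Y A s r P pp Q sx beta rho1 rho2 ee eps bb d q : R) :
  0 < eps -> 0 < T -> 0 < r -> 0 < bb ->
  (1 + eps) * Y <= T -> T ^+ 2 <= Y * A -> P ^+ 2 <= s * A -> r ^+ 2 = s * Y ->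
  0 <= Y -> 0 <= s ->
  0 <= pp -> pp <= P -> 0 <= P -> 0 <= A -> 0 <= Q -> 0 <= sx ->
  q = sx + Q -> beta = bb - sx -> q + 2 * d + 2 * (1 + eps) * r <= bb ->
  0 <= rho1 -> rho1 <= d -> 0 <= rho2 -> rho2 <= T -> ee = A - T + rho2 ->
  0 < (beta - 2 * rho1) * ee - rho2 * (Q + 2 * pp) - eps / bb * T * (beta * Q + beta * pp - rho1 * Q).
Proof.
move=> e0 T0 r0 b0 hTY hTYA hPsA hr Y0 s0 pp0 ppP P0 A0 Q0 sx0 hq hbeta hbb
  r10 r1d r20 r2T hee.
have hA : (1 + eps) * T <= A.
  have h : (1 + eps) * Y * A <= T * A by rewrite ler_wpM2r.
  have h' : (1 + eps) * T * T <= A * T by nra.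
  by rewrite -(ler_pM2r T0).
have hTp : T * pp <= A * r.
  have h : (T * pp) ^+ 2 <= (A * r) ^+ 2.
    rewrite !exprMn hr.
    have h3 : pp ^+ 2 <= P ^+ 2 by nra.
    have h4 : T ^+ 2 * pp ^+ 2 <= (Y * A) * (s * A).
      by apply: ler_pM => //; rewrite ?sqr_ge0 //; apply: le_trans hPsA.
    by have -> : A ^+ 2 * (s * Y) = (Y * A) * (s * A) by ring.
  have Ar0 : 0 <= A * r by rewrite mulr_ge0 // ltW.
  have Tp0 : 0 <= T * pp by rewrite mulr_ge0 // ltW.
  by rewrite -(ler_pXn2r (n := 2)) // nnegrE.
have ee0 : 0 <= ee by rewrite hee; nra.
have h1 : eps / bb * T * (beta * Q + beta * pp - rho1 * Q) <= eps * T * (Q + pp).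
  have hb : eps / bb * beta <= eps.
    rewrite mulrAC ler_pdivrMr //; apply: ler_wpM2l; [exact: ltW | rewrite hbeta; lra].
  have hb' : 0 <= T * (Q + pp) by apply: mulr_ge0; [exact: ltW | exact: addr_ge0].
  have hr1 : 0 <= eps / bb * T * (rho1 * Q) by rewrite !mulr_ge0 // ?invr_ge0 ltW.
  have -> : eps / bb * T * (beta * Q + beta * pp - rho1 * Q) =
            (eps / bb * beta) * (T * (Q + pp)) - eps / bb * T * (rho1 * Q) by ring.
  have : (eps / bb * beta) * (T * (Q + pp)) <= eps * (T * (Q + pp)) by rewrite ler_wpM2r.
  lra.
have h2 : (beta - 2 * d) * ee <= (beta - 2 * rho1) * ee by rewrite ler_wpM2r //; lra.
set B := beta - 2 * d.
have hB : Q + 2 * (1 + eps) * r <= B by rewrite /B hbeta; lra.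
have AT : 0 <= A - T by nra.
pose G z := B * (A - T + z) - z * (Q + 2 * pp) - eps * T * (Q + pp).
have G0 : 0 < G 0.
  rewrite /G addr0 mul0r subr0.
  have i1 : (Q + 2 * (1 + eps) * r) * (A - T) <= B * (A - T) by rewrite ler_wpM2r.
  have i2 : Q * eps * T <= Q * (A - T) by rewrite -mulrA ler_wpM2l //; lra.
  have i3 : eps * (T * pp) <= eps * (A * r) by rewrite ler_wpM2l // ltW.
  have i4 : 0 < r * (eps * (1 + eps) * T) by rewrite !mulr_gt0 //; lra.
  have i5 : r * (eps * (1 + eps) * T) <= r * ((2 + eps) * A - 2 * (1 + eps) * T).
    apply: ler_wpM2l; first exact: ltW.
    have hh : 0 <= (2 + eps) * (A - (1 + eps) * T) by apply: mulr_ge0; lra.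
    nra.
  nra.
have GT : 0 < G T.
  rewrite /G.
  have i1 : (Q + 2 * (1 + eps) * r) * A <= B * A by rewrite ler_wpM2r.
  have i2 : Q * ((1 + eps) * T) <= Q * A by rewrite ler_wpM2l.
  have i3 : (2 + eps) * (T * pp) <= (2 + eps) * (A * r) by rewrite ler_wpM2l //; lra.
  have i4 : 0 < eps * (A * r) by rewrite !mulr_gt0 //; nra.
  nra.
have hG : 0 < G rho2.
  have e : T * G rho2 = (T - rho2) * G 0 + rho2 * G T by rewrite /G; ring.
  have : 0 < T * G rho2.
    rewrite e; have [->|lt] := eqVneq rho2 T.
      by rewrite subrr mul0r add0r mulr_gt0.
    have hp : rho2 < T by rewrite lt_def eq_sym lt r2T.
    have hp' : 0 < T - rho2 by rewrite subr_gt0.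
    have a1 := mulr_gt0 hp' G0.
    have a2 := mulr_ge0 r20 (ltW GT).
    lra.
  by rewrite (pmulr_rgt0 _ T0).
rewrite /G -hee /B in hG.
lra.
Qed.


Lemma sum_pos_ex (R : rcfType) (I : finType) (P : pred I) (f : I -> R) :
  0 < \sum_(i | P i) f i -> exists2 i, P i & 0 < f i.
Proof.
move=> h; case: (pickP (fun i => P i && (0 < f i))) => [i /andP[Pi fi]|no].
  by exists i.
suff : \sum_(i | P i) f i <= 0 by rewrite leNgt h.
apply: sumr_le0 => i Pi; have := no i; rewrite Pi /= => /negbT; by rewrite -leNgt.
Qed.

Lemma main_pos (R : rcfType) (d n : nat) (v : 'I_n -> 'cV[R]_d)
  (x : 'I_n -> R) (q : R) (S : {set 'I_n}) (b : nat) (Z' : 'M[R]_d) (eps : R) :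
  (0 < d)%N ->
  (forall i, 0 <= x i <= 1) ->
  \sum_i x i = q ->
  (\sum_i x i *: outer (v i)) \in unitmx ->
  #|S| = b ->
  (\sum_(i in S) outer (v i)) \in unitmx ->
  (exists2 i0, i0 \in S & exists2 j0, j0 \notin S &
     Z' = swapmx v (\sum_(i in S) outer (v i)) i0 j0) ->
  (forall i j, i \in S -> j \notin S ->
     swapmx v (\sum_(k in S) outer (v k)) i j \in unitmx ->
     Z' \in unitmx /\
     \tr (invmx Z') <= \tr (invmx (swapmx v (\sum_(k in S) outer (v k)) i j))) ->
  0 < eps ->
  \tr (invmx (\sum_(i in S) outer (v i)))
    >= (1 + eps) * \tr (invmx (\sum_i x i *: outer (v i))) ->
  b%:R >= q + 2 * d%:R + 2 * (1 + eps) *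
     Num.sqrt (\tr (\sum_i x i *: outer (v i)) *
               \tr (invmx (\sum_i x i *: outer (v i)))) ->
  Z' \in unitmx /\
  \tr (invmx Z') <= (1 - eps / b%:R) * \tr (invmx (\sum_(i in S) outer (v i))).
Proof.
move=> d0 hx hq Xu hb Zu _ hmin eps0.
set Z := \sum_(i in S) outer (v i).
set X := \sum_i x i *: outer (v i).
move=> htr hb2.
set M := invmx Z. set N := invmx X.
have Zsym : Z^T = Z by rewrite /Z sum_outer1 sym_sum.
have Xsym : X^T = X by rewrite /X sym_sum.
have Msym : M^T = M := inv_sym Zsym.
have Nsym : N^T = N := inv_sym Xsym.
pose mv k := M *m v k. pose nv k := N *m v k.
pose tau k l := dotv (v k) (mv l). pose hh k l := dotv (mv k) (mv l).
have x0 i : 0 <= x i by case/andP: (hx i).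
have x1 i : x i <= 1 by case/andP: (hx i).
have tau_sym k l : tau k l = tau l k by rewrite /tau /mv dotv_mul Msym dotvC.
have ZM : Z *m M = 1%:M by exact: mulmxV.
have MZ : M *m Z = 1%:M by exact: mulVmx.
have XN : X *m N = 1%:M by exact: mulmxV.
have NX : N *m X = 1%:M by exact: mulVmx.
have tau_exp k l : tau k l = \sum_(s in S) tau s k * tau s l.
  have -> : tau k l = dotv (mv l) (Z *m mv k) by rewrite /mv mulmxA ZM mul1mx dotvC.
  rewrite /Z mulmx_suml dotv_sumr; apply: eq_bigr => s _.
  by rewrite outer_mulr dotvZr [dotv (mv l) _]dotvC.
have tau_ge0 k : 0 <= tau k k.
  by rewrite tau_exp sumr_ge0 // => s _; rewrite -expr2 sqr_ge0.
have tau_cs k l : tau k l ^+ 2 <= tau k k * tau l l.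
  have := @cauchy_schwarz R _ (mem S) (fun _ => 1) (tau ^~ k) (tau ^~ l) (fun _ _ => ler01).
  rewrite (tau_exp k l) (tau_exp k k) (tau_exp l l).
  have e1 : \sum_(i in S) 1 * tau i k * tau i l = \sum_(s in S) tau s k * tau s l.
    by apply: eq_bigr => s _; rewrite mul1r.
  have e2 m : \sum_(i in S) 1 * tau i m ^+ 2 = \sum_(s in S) tau s m * tau s m.
    by apply: eq_bigr => s _; rewrite mul1r expr2.
  by rewrite e1 !e2.
have tau_le1 i : i \in S -> tau i i <= 1.
  move=> iS; have h : tau i i ^+ 2 <= tau i i.
    rewrite {2}tau_exp (bigD1 i) //= -expr2 lerDl sumr_ge0 // => s _.
    by rewrite -expr2 sqr_ge0.
  have := tau_ge0 i; nra.
have hh_ge0 k : 0 <= hh k k by exact: dotv_ge0.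
have hh_cs k l : hh k l ^+ 2 <= hh k k * hh l l by exact: dotv_cs.
have T_eq : \tr M = \sum_(s in S) hh s s.
  have -> : \tr M = \tr (M *m Z *m M) by rewrite MZ mul1mx.
  rewrite /Z sum_outer1 tr_sandwich; apply: eq_bigr => s _.
  by rewrite mul1r Msym.
have d_eq : d%:R = \sum_(s in S) tau s s :> R.
  have -> : d%:R = \tr (1%:M *m Z *m M) :> R by rewrite mul1mx ZM mxtrace1.
  rewrite /Z sum_outer1 tr_sandwich; apply: eq_bigr => s _.
  by rewrite mul1r Msym mul1mx dotvC.
have Tx : \tr M = \sum_k x k * dotv (nv k) (mv k).
  have -> : \tr M = \tr (M *m X *m N) by rewrite -mulmxA XN mulmx1.
  by rewrite /X tr_sandwich; apply: eq_bigr => k _; rewrite Nsym.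
have Yx : \tr N = \sum_k x k * dotv (nv k) (nv k).
  have -> : \tr N = \tr (N *m X *m N) by rewrite NX mul1mx.
  by rewrite /X tr_sandwich; apply: eq_bigr => k _; rewrite Nsym.
have dx : d%:R = \sum_k x k * dotv (nv k) (v k) :> R.
  have -> : d%:R = \tr (1%:M *m X *m N) :> R by rewrite mul1mx XN mxtrace1.
  by rewrite /X tr_sandwich; apply: eq_bigr => k _; rewrite Nsym mul1mx.
have sx : \tr X = \sum_k x k * dotv (v k) (v k).
  have -> : \tr X = \tr (1%:M *m X *m 1%:M) by rewrite mul1mx mulmx1.
  by rewrite /X tr_sandwich; apply: eq_bigr => k _; rewrite trmx1 !mul1mx.
set T := \tr M. set Y := \tr N. set s := \tr X.
pose A := \sum_k x k * hh k k. pose P := \sum_k x k * tau k k.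
have hTYA : T ^+ 2 <= Y * A.
  by rewrite /T /Y Tx Yx; exact: (cs_vec nv mv (fun k _ => x0 k)).
have hPsA : P ^+ 2 <= s * A.
  by rewrite /s sx; exact: (cs_vec v mv (fun k _ => x0 k)).
have hdYs : (d%:R : R) ^+ 2 <= Y * s.
  by rewrite /Y /s dx Yx sx; exact: (cs_vec nv v (fun k _ => x0 k)).
have Y0 : 0 <= Y by rewrite /Y Yx sumr_ge0 // => k _; rewrite mulr_ge0 // dotv_ge0.
have s0 : 0 <= s by rewrite /s sx sumr_ge0 // => k _; rewrite mulr_ge0 // dotv_ge0.
have A0 : 0 <= A by rewrite sumr_ge0 // => k _; rewrite mulr_ge0.
have P0 : 0 <= P by rewrite sumr_ge0 // => k _; rewrite mulr_ge0.
have d1 : (1 : R) <= d%:R by rewrite ler1n.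
have Ypos : 0 < Y by nra.
have spos : 0 < s by nra.
have Tpos : 0 < T by nra.
have splitS (F : 'I_n -> R) : \sum_k F k = \sum_(k in S) F k + \sum_(k | k \notin S) F k.
  by rewrite (bigID (mem S)).
pose sxS := \sum_(i in S) x i. pose Q := \sum_(j | j \notin S) x j.
pose beta := \sum_(i in S) (1 - x i).
pose rho1 := \sum_(i in S) (1 - x i) * tau i i.
pose rho2 := \sum_(i in S) (1 - x i) * hh i i.
pose pp := \sum_(j | j \notin S) x j * tau j j.
pose ee := \sum_(j | j \notin S) x j * hh j j.
have hq' : q = sxS + Q by rewrite -hq splitS.
have hbeta : beta = b%:R - sxS by rewrite /beta sumrB sumr_const hb.
have hrho1 : rho1 = d%:R - \sum_(i in S) x i * tau i i.
  by rewrite d_eq /rho1 -sumrB; apply: eq_bigr => i _; ring.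
have hrho2 : rho2 = T - \sum_(i in S) x i * hh i i.
  by rewrite /T T_eq /rho2 -sumrB; apply: eq_bigr => i _; ring.
have hA : A = \sum_(i in S) x i * hh i i + ee by rewrite /A splitS.
have hP : P = \sum_(i in S) x i * tau i i + pp by rewrite /P splitS.
have sxS0 : 0 <= sxS by rewrite sumr_ge0.
have Q0 : 0 <= Q by rewrite sumr_ge0.
have pp0 : 0 <= pp by rewrite sumr_ge0 // => j _; rewrite mulr_ge0.
have sxt0 : 0 <= \sum_(i in S) x i * tau i i by rewrite sumr_ge0 // => j _; rewrite mulr_ge0.
have sxh0 : 0 <= \sum_(i in S) x i * hh i i by rewrite sumr_ge0 // => j _; rewrite mulr_ge0.
have rho10 : 0 <= rho1 by rewrite sumr_ge0 // => j _; rewrite mulr_ge0 // subr_ge0.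
have rho20 : 0 <= rho2 by rewrite sumr_ge0 // => j _; rewrite mulr_ge0 // subr_ge0.
set r := Num.sqrt (s * Y) in hb2.
have rpos : 0 < r by rewrite /r sqrtr_gt0 mulr_gt0.
have hr : r ^+ 2 = s * Y by rewrite /r sqr_sqrtr // mulr_ge0.
have q0 : 0 <= q by lra.
have bpos : 0 < (b%:R : R) by nra.
pose c := eps / b%:R.
have Fpos : 0 < (beta - 2 * rho1) * ee - rho2 * (Q + 2 * pp) - c * T * (beta * Q + beta * pp - rho1 * Q).
  apply: (@final_ineq R T Y A s r P pp Q sxS beta rho1 rho2 ee eps b%:R d%:R q) => //; lra.
pose G i j := (1 - tau i i) * hh j j + 2 * tau i j * hh i j - (1 + tau j j) * hh i i
   - c * T * ((1 - tau i i) * (1 + tau j j) + tau i j ^+ 2).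
pose L i j := (1 - 2 * tau i i) * hh j j - (1 + 2 * tau j j) * hh i i
   - c * T * (1 + tau j j - tau i i).
have c0 : 0 <= c * T by rewrite mulr_ge0 // ?divr_ge0 // ltW.
have inner i : \sum_(j | j \notin S) (1 - x i) * x j * L i j =
    (1 - x i) * ((1 - 2 * tau i i) * ee - hh i i * (Q + 2 * pp) - c * T * (Q + pp - tau i i * Q)).
  rewrite (eq_bigr (fun j => ((1 - x i) * (1 - 2 * tau i i)) * (x j * hh j j)
     + ((1 - x i) * (- hh i i - c * T + c * T * tau i i)) * x j
     + ((1 - x i) * (- 2 * hh i i - c * T)) * (x j * tau j j))); last first.
    by move=> j _; rewrite /L; ring.
  rewrite !big_split /= -!mulr_sumr -/ee -/Q -/pp; ring.
have sumL : \sum_(i in S) \sum_(j | j \notin S) (1 - x i) * x j * L i j =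
    (beta - 2 * rho1) * ee - rho2 * (Q + 2 * pp) - c * T * (beta * Q + beta * pp - rho1 * Q).
  rewrite (eq_bigr _ (fun i _ => inner i)).
  rewrite (eq_bigr (fun i => (1 - x i) * (ee - c * T * (Q + pp))
     + ((1 - x i) * tau i i) * (- 2 * ee + c * T * Q)
     + ((1 - x i) * hh i i) * (- (Q + 2 * pp)))); last first.
    by move=> i _; ring.
  rewrite !big_split /= -!mulr_suml -/beta -/rho1 -/rho2; ring.
have sumGL : \sum_(i in S) \sum_(j | j \notin S) (1 - x i) * x j * L i j <=
             \sum_(i in S) \sum_(j | j \notin S) (1 - x i) * x j * G i j.
  apply: ler_sum => i iS; apply: ler_sum => j jS.
  apply: ler_wpM2l; first by rewrite mulr_ge0 // subr_ge0.
  exact: pair_bound.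
have [i iS] : exists2 i, i \in S & 0 < \sum_(j | j \notin S) (1 - x i) * x j * G i j.
  by apply: sum_pos_ex; rewrite (lt_le_trans _ sumGL) // sumL.
move=> /sum_pos_ex [j jS hG].
have Gpos : 0 < G i j.
  have : 0 <= (1 - x i) * x j by rewrite mulr_ge0 // subr_ge0.
  nra.
pose Dl := (1 - tau i i) * (1 + tau j j) + tau i j ^+ 2.
pose Nn := (1 - tau i i) * hh j j + 2 * tau i j * hh i j - (1 + tau j j) * hh i i.
have ti1 := tau_le1 i iS.
have tj0 := tau_ge0 j.
have Dl0 : 0 <= Dl by rewrite /Dl addr_ge0 ?sqr_ge0 // mulr_ge0 //; lra.
have NnD : c * T * Dl < Nn by move: Gpos; rewrite /G -/Dl -/Nn subr_gt0.
have Dpos : 0 < Dl.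
  rewrite lt_def Dl0 andbT; apply/eqP => D0.
  have a0 : 0 <= (1 - tau i i) * (1 + tau j j) by rewrite mulr_ge0 //; lra.
  have a1 : (1 - tau i i) * (1 + tau j j) = 0.
    by apply/eqP; rewrite eq_le a0 andbT; rewrite -D0 /Dl lerDl sqr_ge0.
  have a2 : 1 - tau i i = 0.
    by move/eqP: a1; rewrite mulf_eq0 => /orP [/eqP //|]; rewrite gt_eqF //; lra.
  have a3 : tau i j ^+ 2 = 0 by move: D0; rewrite /Dl a1 add0r.
  have a4 : tau i j = 0 by move/eqP: a3; rewrite sqrf_eq0 => /eqP.
  move: NnD; rewrite D0 mulr0 /Nn a2 a4.
  by move=> h; have := hh_ge0 i; nra.
have hD : Dl != 0 by rewrite gt_eqF.
have [u2 tr2] := @swap_inv R d Z (v i) (v j) Zu Msym hD.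
have [Z'u trZ'] := hmin i j iS jS u2.
split => //.
apply: (le_trans trZ').
have -> : \tr (invmx (swapmx v (\sum_(k in S) outer (v k)) i j)) = T - Nn / Dl by exact: tr2.
have : c * T <= Nn / Dl by rewrite ler_pdivlMr // ltW.
rewrite -/c /T; lra.
Qed.

Unset Implicit Arguments.
Set Strict Implicit.

Theorem proposition3p8 (R : rcfType) (d n : nat) (v : 'I_n -> 'cV[R]_d)
  (x : 'I_n -> R) (q : R) (S : {set 'I_n}) (b : nat) (Z' : 'M[R]_d) (eps : R) :
  (forall i, 0 <= x i <= 1) ->
  \sum_i x i = q ->
  (\sum_i x i *: outer (v i)) \in unitmx ->
  #|S| = b ->
  (\sum_(i in S) outer (v i)) \in unitmx ->
  (* Z' is a minimizer of tr((Z - v_i v_i^T + v_j v_j^T)^-1) over i in S,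
     j notin S, singular matrices having value +oo *)
  (exists2 i0, i0 \in S & exists2 j0, j0 \notin S &
     Z' = swapmx v (\sum_(i in S) outer (v i)) i0 j0) ->
  (forall i j, i \in S -> j \notin S ->
     swapmx v (\sum_(k in S) outer (v k)) i j \in unitmx ->
     Z' \in unitmx /\
     \tr (invmx Z') <= \tr (invmx (swapmx v (\sum_(k in S) outer (v k)) i j))) ->
  0 < eps ->
  \tr (invmx (\sum_(i in S) outer (v i)))
    >= (1 + eps) * \tr (invmx (\sum_i x i *: outer (v i))) ->
  b%:R >= q + 2 * d%:R + 2 * (1 + eps) *
     Num.sqrt (\tr (\sum_i x i *: outer (v i)) *
               \tr (invmx (\sum_i x i *: outer (v i)))) ->
  Z' \in unitmx /\
  \tr (invmx Z') <= (1 - eps / b%:R) * \tr (invmx (\sum_(i in S) outer (v i))).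

Proof.
case: d v Z' => [|d] v Z' hx hq Xu hb Zu hex hmin eps0 htr hb2.
  split; first by rewrite unitmxE det_mx00 unitr1.
  by rewrite /mxtrace !big_ord0 mulr0.
exact: (@main_pos R d.+1 n v x q S b Z' eps (ltn0Sn d) hx hq Xu hb Zu hex hmin eps0 htr hb2).
Qed.
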